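(* Let $x\in\mathbb{R}^n_{++}$ and $y\in\mathbb{R}^n_+$ with $D_h(x,y)<\infty$. Then $$y_{\min}\ge -x_{\min}\,W_0\!\left(-\exp\!\left(-1-\frac{D_h(x,y)}{x_{\min}}\right)\right),$$ where $x_{\min}=\min_i x_i$ and $y_{\min}=\min_i y_i$.
   Context: $D_h(x,y)=\sum_i\big(x_i\log\frac{x_i}{y_i}-x_i+y_i\big)$ (Bregman divergence of $h(x)=\sum_i x_i(\log x_i-1)$), which is $+\infty$ if some $y_i=0$. $W_0$ is the principal branch of the Lambert $W$ function. *)

(* Defs.v *)
From HB Require Import structures.
From mathcomp Require Import all_boot all_order all_algebra.
From mathcomp Require Import all_classical all_reals all_analysis.
Set Implicit Arguments. Unset Strict Implicit. Unset Printing Implicit Defensive.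
Import Order.TTheory GRing.Theory Num.Theory.
Local Open Scope ring_scope.

(* Bregman divergence of h(x) = sum_i x_i (log x_i - 1), valued in \bar R:
   +oo when some y_i = 0. *)
Definition Dh (R : realType) (n : nat) (x y : 'I_n -> R) : \bar R :=
  if [forall i, y i != 0]
  then (\sum_(i < n) (x i * ln (x i / y i) - x i + y i))%:E
  else +oo%E.

Definition vmin (R : realType) (n : nat) (x : 'I_n.+1 -> R) : R :=
  \big[Order.min/x ord0]_(i < n.+1) x i.

(* Principal branch W_0 of the Lambert W function: for z >= -1/e, the unique
   w >= -1 with w * exp w = z (chosen by xget; default 0 off the domain). *)
Definition LambertW0 (R : realType) (z : R) : R :=
  xget 0 [set w : R | -1 <= w /\ w * expR w = z].

(* Main.v *)
Require Import Defs.
From mathcomp Require Import all_boot all_order all_algebra.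
From mathcomp Require Import all_classical all_reals all_analysis.
From mathcomp Require Import lra ring.
Import Order.TTheory GRing.Theory Num.Theory.
Local Open Scope ring_scope.

Lemma ln_le_sub1 (R : realType) (r : R) : 0 < r -> ln r <= r - 1.
Proof.
move=> r0; have := @le_ln1Dx R (r - 1).
rewrite addrCA subrr addr0; apply; lra.
Qed.

Lemma key_term (R : realType) (a b : R) : 0 < a -> 0 < b -> a - b <= a * ln (a / b).
Proof.
move=> a0 b0.
have ba : 0 < b / a by rewrite divr_gt0.
have -> : a / b = (b / a)^-1 by rewrite invf_div.
rewrite lnV ?posrE //.
have h := @ln_le_sub1 R _ ba.
have : a * ln (b / a) <= a * (b / a - 1) by rewrite ler_pM2l.
rewrite mulrBr mulr1 mulrCA divff ?gt_eqF // mulr1 => h2.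
rewrite mulrN; lra.
Qed.

Lemma vmin_le (R : realType) (n : nat) (x : 'I_n.+1 -> R) i : vmin x <= x i.
Proof. exact: bigmin_le. Qed.

Lemma vmin_ex (R : realType) (n : nat) (x : 'I_n.+1 -> R) : exists k, vmin x = x k.
Proof.
rewrite /vmin; apply: (big_ind (fun v => exists k, v = x k)).
- by exists ord0.
- move=> a b [k ->] [l ->]; rewrite minElt; case: ifP => _; [by exists k | by exists l].
- by move=> i _; exists i.
Qed.

Lemma wexp_strict (R : realType) (a b : R) : -1 <= a -> a < b -> b <= 0 ->
  a * expR a < b * expR b.
Proof.
move=> a1 ab b0.
set d := b - a.
have d0 : d != 0 by rewrite subr_eq0 gt_eqF.
have hd : 1 - d < expR (- d) by have := expR_gt1Dx (x:=-d); rewrite oppr_eq0 => /(_ d0).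
have a0 : a < 0 by apply: lt_le_trans ab b0.
have ea : expR a = expR b * expR (- d).
  by rewrite -expRD /d opprB addrCA subrr addr0.
rewrite ea mulrCA [b * _]mulrC ltr_pM2l ?expR_gt0 //.
have h1 : a * expR (- d) < a * (1 - d) by rewrite ltr_nM2l.
have : a * (1 - d) <= b by rewrite /d; nra.
lra.
Qed.

Theorem lemmaB3 (R : realType) (n : nat) (x y : 'I_n.+1 -> R)
  (hx : forall i, 0 < x i) (hy : forall i, 0 <= y i)
  (hD : (Dh x y < +oo)%E) :
  vmin y >= - vmin x * LambertW0 (- expR (-1 - fine (Dh x y) / vmin x)).
Proof.
have [k hk] := @vmin_ex R n x.
have [l hl] := @vmin_ex R n y.
set m := vmin x in hk *; set t := vmin y in hl *.
move: hD; rewrite /Dh; case: ifP => [/forallP hy0 _ /=| _]; last by [].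
have ypos i : 0 < y i by rewrite lt0r hy0 hy.
have m0 : 0 < m by rewrite hk.
have t0 : 0 < t by rewrite hl.
set D := \sum_(i < n.+1) _.
rewrite /LambertW0; case: xgetP => [w _ [w1 hw]|_]; last by rewrite mulr0 ltW.
have [mt|tm] := leP m t.
  nra.
have termge i : 0 <= x i * ln (x i / y i) - x i + y i.
  by have := @key_term R _ _ (hx i) (ypos i); lra.
have Dl : x l * ln (x l / y l) - x l + y l <= D.
  rewrite /D (bigD1 l) //= lerDl; apply: sumr_ge0 => i _; exact: termge.
rewrite -hl in Dl.
have ml : m <= x l by rewrite /m (@vmin_le R n).
have xl0 := hx l.
(* f(x l) >= f(m) *)
have fm : m * ln (m / t) - m + t <= D.
  apply: le_trans Dl.
  have e1 : x l / t = (x l / m) * (m / t) by rewrite mulrA divfK ?gt_eqF.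
  rewrite e1 (@lnM R (x l / m) (m / t)) ?posrE ?divr_gt0 //.
  have := @key_term R _ _ xl0 m0.
  have lmt : 0 <= ln (m / t).
    by rewrite -ln1 ler_ln ?posrE ?divr_gt0 // ler_pdivlMr // mul1r ltW.
  have : 0 <= (x l - m) * ln (m / t) by rewrite mulr_ge0 // subr_ge0.
  nra.
set u := t / m.
have u0 : 0 < u by rewrite divr_gt0.
have u1 : u < 1 by rewrite ltr_pdivrMr // mul1r.
have lnu : ln (m / t) = - ln u by rewrite -lnV ?posrE // invf_div.
have bound : -1 - D / m <= ln u - u.
  have h : (m * - ln u - m + t) / m <= D / m by rewrite ler_pM2r ?invr_gt0 // -lnu.
  have e : (m * - ln u - m + t) / m = - ln u - 1 + u.
    by rewrite /u; field; rewrite gt_eqF.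
  lra.
have eb : expR (-1 - D / m) <= u * expR (- u).
  have -> : u * expR (- u) = expR (ln u - u) by rewrite expRD lnK ?posrE.
  by rewrite ler_expR.
rewrite leNgt; apply/negP => hlt.
have wu : w < - u.
  rewrite /u ltrNr ltr_pdivrMr //; nra.
have u0' : - u <= 0 by rewrite oppr_le0 ltW.
have := @wexp_strict R _ _ w1 wu u0'.
move=> H.
have H2 : - expR (-1 - D / m) < - (u * expR (- u)).
  by rewrite -hw -mulNr.
rewrite ltrN2 in H2.
by move: (lt_le_trans H2 eb); rewrite ltxx.
Qed.
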